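(* Let $(X,d,\theta)$ be a $\theta$-metric space with $\theta$ a $B$-action. Then for every $a\in X$ and every $k>0$ there exists $r>0$ such that for all $b\in X$ with $d(a,b)\ge k$ and all $c\in X$, one has $d(a,c)+d(c,b)\ge r$.
   Context: A $B$-action is a map $\theta:[0,\infty)\times[0,\infty)\to[0,\infty)$ that is continuous in each variable separately and satisfies: (i) $\theta(0,0)=0$ and $\theta(s,t)=\theta(t,s)$ for all $s,t\ge0$; (ii) $\theta(x,y)<\theta(s,t)$ whenever either $x\le s,\ y<t$ or $x<s,\ y\le t$; (iii) for each $m\in\mathrm{Im}(\theta)=\{\theta(s,t):s,t\ge0\}$ and each $t\in[0,m]$ there is $s\in[0,m]$ with $\theta(s,t)=m$; (iv) $\theta(s,0)\le s$ for all $s>0$. A $\theta$-metric on a non-empty set $X$ with respect to a $B$-action $\theta$ is a map $d:X\times X\to[0,\infty)$ such that for all $x,y,z\in X$: $d(x,y)=0$ iff $x=y$; $d(x,y)=d(y,x)$; $d(x,z)\le\theta(d(x,y),d(y,z))$. *)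

(* Defs.v *)
From Stdlib Require Import Reals.
Open Scope R_scope.

(* A map [0,oo) x [0,oo) -> [0,oo) is modelled as theta : R -> R -> R;
   all conditions only concern nonnegative arguments. *)

Definition cont_nonneg_at (f : R -> R) (x : R) : Prop :=
  forall eps, eps > 0 -> exists delta, delta > 0 /\
    forall y, 0 <= y -> Rabs (y - x) < delta -> Rabs (f y - f x) < eps.

Definition B_action (theta : R -> R -> R) : Prop :=
  (forall s t, 0 <= s -> 0 <= t -> 0 <= theta s t) /\
  (forall t, 0 <= t -> forall s, 0 <= s -> cont_nonneg_at (fun u => theta u t) s) /\
  (forall s, 0 <= s -> forall t, 0 <= t -> cont_nonneg_at (fun u => theta s u) t) /\
  theta 0 0 = 0 /\
  (forall s t, 0 <= s -> 0 <= t -> theta s t = theta t s) /\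
  (forall x y s t, 0 <= x -> 0 <= y -> 0 <= s -> 0 <= t ->
     ((x <= s /\ y < t) \/ (x < s /\ y <= t)) -> theta x y < theta s t) /\
  (forall m, (exists s t, 0 <= s /\ 0 <= t /\ theta s t = m) ->
     forall t, 0 <= t <= m -> exists s, 0 <= s <= m /\ theta s t = m) /\
  (forall s, s > 0 -> theta s 0 <= s).

Definition theta_metric {X : Type} (theta : R -> R -> R) (d : X -> X -> R) : Prop :=
  (forall x y, 0 <= d x y) /\
  (forall x y, d x y = 0 <-> x = y) /\
  (forall x y, d x y = d y x) /\
  (forall x y z, d x z <= theta (d x y) (d y z)).

(* Main.v *)
Require Import Defs.
From Stdlib Require Import Reals Lra.
Open Scope R_scope.

Theorem mainTheorem9 (X : Type) (theta : R -> R -> R) (d : X -> X -> R)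
  (Htheta : B_action theta) (Hd : theta_metric theta d) :
  forall (a : X) (k : R), k > 0 ->
    exists r, r > 0 /\
      forall b c : X, d a b >= k -> d a c + d c b >= r.
Proof.
  destruct Htheta as [Hpos [Hc1 [Hc2 [H00 [Hsym [Hmono _]]]]]].
  destruct Hd as [Hdpos [_ [_ Htri]]].
  intros a k Hk.
  destruct (Hc2 0 (Rle_refl 0) 0 (Rle_refl 0) k Hk) as [v [Hv Hv']].
  set (v' := v/2).
  assert (Hv2 : theta 0 v' < k).
  { specialize (Hv' v'). simpl in Hv'. rewrite H00 in Hv'.
    assert (Rabs (theta 0 v' - 0) < k) by (apply Hv'; unfold v'; [lra| rewrite Rminus_0_r, Rabs_right; lra]).
    rewrite Rminus_0_r in H. apply Rabs_def2 in H. lra. }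
  assert (Hv'p : 0 <= v') by (unfold v'; lra).
  destruct (Hc1 v' Hv'p 0 (Rle_refl 0) (k - theta 0 v') ltac:(lra)) as [u [Hu Hu']].
  set (u' := u/2).
  assert (Hu2 : theta u' v' < k).
  { specialize (Hu' u'). simpl in Hu'.
    assert (Rabs (theta u' v' - theta 0 v') < k - theta 0 v') by (apply Hu'; unfold u'; [lra| rewrite Rminus_0_r, Rabs_right; lra]).
    apply Rabs_def2 in H. lra. }
  exists (Rmin u' v'). split.
  { unfold Rmin; destruct Rle_dec; unfold u', v'; lra. }
  intros b c Hb.
  destruct (Rle_dec (Rmin u' v') (d a c + d c b)) as [H|H]; [lra|].
  exfalso.
  pose proof (Hdpos a c). pose proof (Hdpos c b).
  assert (d a c < u' /\ d c b < v') as [Ha1 Ha2].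
  { pose proof (Rmin_l u' v'). pose proof (Rmin_r u' v'). lra. }
  assert (theta (d a c) (d c b) < theta u' v').
  { apply Hmono; unfold u' in *; lra. }
  pose proof (Htri a c b). lra.
Qed.
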